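(* For every $\alpha\in(0,1)$, the function $\delta\mapsto\psi_2\big(\alpha,L(\alpha;\delta);\delta\big)$ is strictly decreasing on $\delta\in(0,\infty)$.
   Context: For real $\alpha\ge0$, $\sigma^2\ge0$, $(\alpha,\sigma^2)\ne(0,0)$: $\psi_2(\alpha,\sigma^2;\delta)=\frac4\delta\big(\alpha^2+\sigma^2+1-\int_0^{\pi/2}\frac{2\alpha^2\sin^2\theta+\sigma^2}{(\alpha^2\sin^2\theta+\sigma^2)^{1/2}}d\theta\big)$. For $s\ge0$ let $\phi_1(s)=\int_0^{\pi/2}\frac{\sin^2\theta}{(\sin^2\theta+s^2)^{1/2}}d\theta$ (strictly decreasing from $1$ to $0$, inverse $\phi_1^{-1}:(0,1]\to[0,\infty)$) and $\phi_2(s)=\int_0^{\pi/2}\frac{2\sin^2\theta+s^2}{(\sin^2\theta+s^2)^{1/2}}d\theta$. For $\alpha\in(0,1)$, $\delta>0$: $L(\alpha;\delta)=\frac4\delta\Big(1-\frac{\phi_2^2(\phi_1^{-1}(\alpha))}{4[1+(\phi_1^{-1}(\alpha))^2]}\Big)$. *)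

(* Defs.v *)
From Stdlib Require Import Reals Lra ClassicalEpsilon.
Open Scope R_scope.

(* Riemann integral of f over [a,b], as a total function: the (unique, by
   RiemannInt_P5) value of RiemannInt pr for any integrability proof pr.
   Unspecified if f is not Riemann integrable (never used in that case). *)
Definition integral (f : R -> R) (a b : R) : R :=
  epsilon (inhabits 0)
    (fun v => exists pr : Riemann_integrable f a b, RiemannInt pr = v).

(* psi_2(alpha, sigma^2; delta); the second argument s2 is sigma^2 itself. *)
Definition psi2 (a s2 d : R) : R :=
  4 / d * (a ^ 2 + s2 + 1 -
    integral (fun t => (2 * a ^ 2 * sin t ^ 2 + s2) / sqrt (a ^ 2 * sin t ^ 2 + s2))
      0 (PI / 2)).

Definition phi1 (s : R) : R :=
  integral (fun t => sin t ^ 2 / sqrt (sin t ^ 2 + s ^ 2)) 0 (PI / 2).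

Definition phi2 (s : R) : R :=
  integral (fun t => (2 * sin t ^ 2 + s ^ 2) / sqrt (sin t ^ 2 + s ^ 2)) 0 (PI / 2).

(* Inverse of phi1 on (0,1]: the s >= 0 with phi1 s = a (unique since phi1 is
   strictly decreasing on [0,oo)). *)
Definition phi1_inv (a : R) : R :=
  epsilon (inhabits 0) (fun s => 0 <= s /\ phi1 s = a).

Definition Lfun (a d : R) : R :=
  4 / d * (1 - phi2 (phi1_inv a) ^ 2 / (4 * (1 + phi1_inv a ^ 2))).

(* Main.v *)
Require Import Defs.
From Stdlib Require Import Reals Lra Lia Psatz ClassicalEpsilon FunctionalExtensionality Factorial.
From Coquelicot Require Import Coquelicot.
Open Scope R_scope.

Lemma integral_RInt f a b : ex_RInt f a b -> integral f a b = RInt f a b.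
Proof.
  intros H. unfold integral.
  destruct (epsilon_spec (inhabits 0) (fun v => exists pr : Riemann_integrable f a b, RiemannInt pr = v)) as [pr Hpr].
  { exists (RiemannInt (ex_RInt_Reals_0 _ _ _ H)). eexists; reflexivity. }
  rewrite <- Hpr. symmetry; apply RInt_Reals.
Qed.

Lemma fact_val n : INR (fact (S n)) = INR (S n) * INR (fact n).
Proof. rewrite <- mult_INR; reflexivity. Qed.

Lemma PI_lt_32 : PI < 32/10.
Proof.
  destruct (Rlt_or_le PI (32/10)) as [h|h]; [exact h|].
  exfalso.
  assert (H1 := pre_sin_bound (32/10) 1 ltac:(lra) ltac:(lra)).
  assert (H2 : 0 <= sin (32/10)) by (apply sin_ge_0; lra).
  destruct H1 as [_ H1].
  unfold sin_approx, sin_term in H1.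
  change (2*(1+1))%nat with 4%nat in H1.
  cbn [sum_f_R0 Nat.mul Nat.add] in H1.
  rewrite !fact_val in H1. cbn [fact] in H1. rewrite !S_INR in H1. cbn [INR] in H1.
  lra.
Qed.

Lemma jordan t : 0 <= t <= PI/2 -> 2/PI*t <= sin t.
Proof.
  intros Ht. assert (HP := PI_RGT_0).
  destruct (Rle_or_lt (2/PI*t) (sin t)) as [h|h]; [exact h|exfalso].
  set (g := fun x => sin x - 2/PI*x).
  set (g' := fun x => cos x - 2/PI).
  assert (D : forall c, derivable_pt_lim g c (g' c)).
  { intros c. unfold g, g'. apply derivable_pt_lim_minus. apply derivable_pt_lim_sin.
    replace (2/PI) with (2/PI*1) at 2 by ring. apply derivable_pt_lim_scal. apply derivable_pt_lim_id. }
  assert (t0 : 0 < t).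
  { destruct (Req_dec t 0) as [e|e]; [subst; rewrite sin_0 in h; lra| lra]. }
  assert (t1 : t < PI/2).
  { destruct (Req_dec t (PI/2)) as [e|e]; [rewrite e, sin_PI2 in h; field_simplify in h; lra| lra]. }
  destruct (MVT_cor2 g g' 0 t t0 (fun c _ => D c)) as [c1 [E1 C1]].
  destruct (MVT_cor2 g g' t (PI/2) t1 (fun c _ => D c)) as [c2 [E2 C2]].
  unfold g, g' in E1, E2. rewrite sin_0, sin_PI2 in *.
  assert (cos c1 - 2/PI < 0).
  { assert ((cos c1 - 2/PI) * (t - 0) < 0) by (rewrite <- E1; lra).
    destruct (Rle_or_lt 0 (cos c1 - 2/PI)); [|lra]. nra. }
  assert (cos c2 - 2/PI > 0).
  { assert (E : 1 - 2/PI*(PI/2) = 0) by (field; lra).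
    assert ((cos c2 - 2/PI) * (PI/2 - t) > 0) by (rewrite <- E2; lra).
    destruct (Rle_or_lt (cos c2 - 2/PI) 0); [|lra]. nra. }
  assert (cos c2 < cos c1) by (apply cos_decreasing_1; lra).
  lra.
Qed.



Definition jf s x := x * ((2*s^2+x)/sqrt(s^2+x)).
Definition T1 s x := x^2/(2*sqrt(s^2+x)^3).
Definition T2 s x := x^2/(sqrt(s^2+x)*(sqrt(s^2+x)+s)^2).

Lemma sqrt_facts s x : 0 <= s -> 0 < x ->
  let r := sqrt (s^2+x) in r*r = s^2+x /\ 0 < r /\ s < r.
Proof.
  intros Hs Hx r.
  assert (e : r*r = s^2+x) by (apply sqrt_sqrt; nra).
  assert (p : 0 < r) by (apply sqrt_lt_R0; nra).
  split; [exact e|split; [exact p|nra]].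
Qed.

Lemma conv s y z : 0 <= s -> 0 < y -> y <= z ->
  jf s z - jf s y <= (z-y) * (2*s + T1 s z + T2 s z).
Proof.
  intros Hs Hy Hz. unfold jf, T1, T2.
  destruct (sqrt_facts s y Hs Hy) as [e1 [p1 q1]].
  destruct (sqrt_facts s z Hs ltac:(lra)) as [e2 [p2 q2]].
  assert (le12 : sqrt (s^2+y) <= sqrt (s^2+z)) by (apply sqrt_le_1_alt; lra).
  set (r1 := sqrt (s^2+y)) in *. set (r2 := sqrt (s^2+z)) in *.
  clearbody r1 r2.
  assert (Ey : y = r1*r1 - s^2) by lra. assert (Ez : z = r2*r2 - s^2) by lra.
  subst y z.
  assert (N : 0 <= r1*r2^3*(r2+2*r1) - s^4*(r1+2*r2)).
  { assert (s^4 <= r1^4) by (apply pow_incr; lra).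
    assert (r1^3 <= r2^3) by (apply pow_incr; lra).
    assert (r1^4*(r1+2*r2) <= r1*r2^3*(r2+2*r1)).
    { assert (r1^4 <= r2^4) by (apply pow_incr; lra).
      assert (r1*r1 <= r2*r2) by nra.
      assert (r1*r2*(r1*r1) <= r1*r2*(r2*r2)) by (apply Rmult_le_compat_l; nra).
      nra. }
    assert (s^4*(r1+2*r2) <= r1^4*(r1+2*r2)) by (apply Rmult_le_compat_r; lra).
    lra. }
  match goal with |- ?L <= ?R => assert (E : R - L = (r2-r1)^2*(r1*r2^3*(r2+2*r1) - s^4*(r1+2*r2))/(2*r1*r2^3)) end.
  { field. split; lra. }
  assert (0 <= (r2-r1)^2*(r1*r2^3*(r2+2*r1) - s^4*(r1+2*r2))/(2*r1*r2^3)).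
  { apply Rmult_le_pos. apply Rmult_le_pos; [apply pow2_ge_0|exact N].
    apply Rlt_le, Rinv_0_lt_compat. apply Rmult_lt_0_compat; [lra| apply pow_lt; lra]. }
  lra.
Qed.

Lemma Tmono t s x : 0 <= t -> t <= s -> 0 < x ->
  T1 s x + T2 s x <= T1 t x + T2 t x.
Proof.
  intros Ht Hts Hx. unfold T1, T2.
  destruct (sqrt_facts t x Ht Hx) as [e1 [p1 q1]].
  destruct (sqrt_facts s x ltac:(lra) Hx) as [e2 [p2 q2]].
  assert (le12 : sqrt (t^2+x) <= sqrt (s^2+x)) by (apply sqrt_le_1_alt; nra).
  set (r1 := sqrt (t^2+x)) in *. set (r2 := sqrt (s^2+x)) in *.
  clearbody r1 r2.
  unfold Rdiv. apply Rplus_le_compat; apply Rmult_le_compat_l; try (apply pow2_ge_0);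
   apply Rinv_le_contravar.
  - apply Rmult_lt_0_compat; [lra|apply pow_lt; lra].
  - apply Rmult_le_compat_l; [lra|]. apply pow_incr; lra.
  - apply Rmult_lt_0_compat; [lra|apply pow_lt; lra].
  - apply Rmult_le_compat; try lra. apply pow2_ge_0. apply pow_incr; lra.
Qed.

Lemma T2_id s x : 0 <= s -> 0 < x ->
  (2*s^2+x)/sqrt(s^2+x) = 2*s + T2 s x.
Proof.
  intros Hs Hx. unfold T2.
  destruct (sqrt_facts s x Hs Hx) as [e [p q]].
  set (r := sqrt (s^2+x)) in *. clearbody r.
  assert (Ex : x = r*r - s^2) by lra. subst x. field. lra.
Qed.

Lemma T_nonneg s x : 0 <= s -> 0 < x -> 0 <= T1 s x /\ 0 <= T2 s x.
Proof.
  intros Hs Hx. unfold T1, T2.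
  destruct (sqrt_facts s x Hs Hx) as [e [p q]].
  set (r := sqrt (s^2+x)) in *. clearbody r.
  split; apply Rmult_le_pos; try apply pow2_ge_0; apply Rlt_le, Rinv_0_lt_compat.
  - apply Rmult_lt_0_compat; [lra|apply pow_lt; lra].
  - apply Rmult_lt_0_compat; [lra|apply pow_lt; lra].
Qed.

Lemma alg a z R : 0 < a < 1 -> 0 < z -> R*R = a^2+z -> 0 < R -> forall P, 0 < P -> P <= 32/10 ->
  P*z/(4*R) + P*z/(2*(a+R)) <= (1-a)^2 + 19/10*z.
Proof.
  intros Ha Hz ER HR P HP HP'.
  assert (aR : a < R) by nra.
  set (h := R - a).
  assert (Eh : R = a + h) by (unfold h; ring). clearbody h. subst R.
  assert (hp : 0 < h) by lra.
  assert (Ez : z = h*(2*a+h)) by nra. subst z.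
  assert (S1 : P*(h*(2*a+h))/(4*(a+h)) + P*(h*(2*a+h))/(2*(a+(a+h)))
     <= 32/10*(h*(2*a+h))/(4*(a+h)) + 32/10*(h*(2*a+h))/(2*(a+(a+h)))).
  { unfold Rdiv. apply Rplus_le_compat; apply Rmult_le_compat_r;
    try (apply Rlt_le, Rinv_0_lt_compat; lra); apply Rmult_le_compat_r; nra. }
  eapply Rle_trans; [exact S1|].
  assert (E2 : 32/10*(h*(2*a+h))/(4*(a+h)) + 32/10*(h*(2*a+h))/(2*(a+(a+h)))
     = (8/10*h*(2*a+h) + 16/10*h*(a+h))/(a+h)) by (field; lra).
  rewrite E2.
  apply (Rmult_le_reg_r (a+h)); [lra|].
  unfold Rdiv. rewrite Rmult_assoc, Rinv_l, Rmult_1_r by lra.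
  destruct (Rle_or_lt a (1/2)) as [A|A].
  - assert (Q : 0 <= 19/10*h^2 + (38/10*a - 26/10)*h + (1-a)^2 - 2/10*a).
    { assert (0 <= 19/10*(h + (38/10*a-26/10)/(38/10))^2) by (apply Rmult_le_pos; [lra|apply pow2_ge_0]).
      nra. }
    assert (0 <= (a+h)*(19/10*h^2 + (38/10*a - 26/10)*h + (1-a)^2 - 2/10*a)) by (apply Rmult_le_pos; lra).
    assert (0 <= 2/10*(a-h)^2) by (apply Rmult_le_pos; [lra|apply pow2_ge_0]).
    nra.
  - assert (Q : 0 <= (1-a)^2 + 38/10*a*h + 19/10*h^2 - 32/10*h).
    { destruct (Rle_or_lt a (85/100)).
      + assert (0 <= 19/10*(h + (38/10*a-32/10)/(38/10))^2) by (apply Rmult_le_pos; [lra|apply pow2_ge_0]).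
        nra.
      + nra. }
    assert (0 <= (a+h)*((1-a)^2 + 38/10*a*h + 19/10*h^2 - 32/10*h)) by (apply Rmult_le_pos; lra).
    assert (0 <= 8/10*h*h) by nra.
    nra.
Qed.



Lemma sq_pos c x z : 0 < z -> 0 < (c*x)^2 + z.
Proof. intros; nra. Qed.

Ltac sqrt_clean c x z Hz :=
  replace (c*x*(c*x*1)+z) with ((c*x)^2+z) by ring;
  let e := fresh "e" in let p := fresh "p" in
  assert (e : sqrt ((c*x)^2+z) * sqrt ((c*x)^2+z) = (c*x)^2+z) by (apply sqrt_sqrt; nra);
  assert (p : 0 < sqrt ((c*x)^2+z)) by (apply sqrt_lt_R0; nra);
  set (ρ := sqrt ((c*x)^2+z)) in *; clearbody ρ.

Lemma dA1 c z x : 0 < z ->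
  is_derive (fun t => z/2 * t / sqrt((c*t)^2+z)) x (T1 (c*x) z).
Proof.
  intros Hz. unfold T1. auto_derive.
  - split; [nra|split;[apply Rgt_not_eq, sqrt_lt_R0; nra|auto]].
  - sqrt_clean c x z Hz.
    assert (Ez : z = ρ*ρ - (c*x)^2) by lra. rewrite Ez. field. lra.
Qed.

Lemma dA2 c z x : 0 < c -> 0 < z -> 0 <= x ->
  is_derive (fun t => -(z^2/(2*c)) / (sqrt((c*t)^2+z) + c*t)^2) x (T2 (c*x) z).
Proof.
  intros Hc Hz Hx. unfold T2.
  assert (0 <= c*x) by nra.
  auto_derive.
  - split; [nra|split;[|auto]].
    assert (0 < sqrt ((c*x)^2+z)) by (apply sqrt_lt_R0; nra).
    replace (c*x*(c*x*1)+z) with ((c*x)^2+z) by ring. nra.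
  - sqrt_clean c x z Hz.
    assert (Ez : z = ρ*ρ - (c*x)^2) by lra. rewrite Ez. field. split; nra.
Qed.

Lemma cont_T1 c z x : 0 < z -> continuous (fun t => T1 (c*t) z) x.
Proof.
  intros Hz. apply (ex_derive_continuous (K:=R_AbsRing) (V:=R_NormedModule)). unfold T1. auto_derive.
  assert (0 < sqrt ((c*x)^2+z)) by (apply sqrt_lt_R0; nra).
  replace (c*x*(c*x*1)+z) with ((c*x)^2+z) by ring.
  split; [nra|split; [|auto]]. apply Rgt_not_eq. apply Rmult_lt_0_compat; [lra|].
  repeat apply Rmult_lt_0_compat; lra.
Qed.

Lemma cont_T2 c z x : 0 <= c -> 0 < z -> 0 <= x -> continuous (fun t => T2 (c*t) z) x.
Proof.
  intros Hc Hz Hx. apply (ex_derive_continuous (K:=R_AbsRing) (V:=R_NormedModule)). unfold T2.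
  assert (0 <= c*x) by nra.
  assert (0 < sqrt ((c*x)^2+z)) by (apply sqrt_lt_R0; nra).
  auto_derive.
  replace (c*x*(c*x*1)+z) with ((c*x)^2+z) by ring.
  repeat split; try nra; apply Rgt_not_eq; repeat apply Rmult_lt_0_compat; lra.
Qed.

Lemma int_T1 a z : 0 < a -> 0 < z ->
  is_RInt (fun t => T1 (2*a/PI*t) z) 0 (PI/2) (PI*z/(4*sqrt(a^2+z))).
Proof.
  intros Ha Hz. assert (HP := PI_RGT_0).
  set (c := 2*a/PI).
  assert (Hc : c * (PI/2) = a) by (unfold c; field; lra).
  assert (E : PI*z/(4*sqrt(a^2+z)) =
    minus ((fun t => z/2 * t / sqrt((c*t)^2+z)) (PI/2)) ((fun t => z/2 * t / sqrt((c*t)^2+z)) 0)).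
  { cbv beta. change (minus ?u ?v) with (Rminus u v). rewrite Hc. field.
    split; apply Rgt_not_eq, sqrt_lt_R0; nra. }
  rewrite E. apply (is_RInt_derive (fun t => z/2 * t / sqrt((c*t)^2+z)) (fun t => T1 (c*t) z)).
  - intros x _. apply dA1; exact Hz.
  - intros x _. apply cont_T1; exact Hz.
Qed.

Lemma int_T2 a z : 0 < a -> 0 < z ->
  is_RInt (fun t => T2 (2*a/PI*t) z) 0 (PI/2) (PI*z/(2*(a+sqrt(a^2+z)))).
Proof.
  intros Ha Hz. assert (HP := PI_RGT_0).
  set (c := 2*a/PI).
  assert (c0 : 0 < c) by (unfold c; apply Rdiv_lt_0_compat; lra).
  assert (Hc : c * (PI/2) = a) by (unfold c; field; lra).
  assert (E : PI*z/(2*(a+sqrt(a^2+z))) =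
    minus ((fun t => -(z^2/(2*c)) / (sqrt((c*t)^2+z) + c*t)^2) (PI/2))
          ((fun t => -(z^2/(2*c)) / (sqrt((c*t)^2+z) + c*t)^2) 0)).
  { cbv beta. change (minus ?u ?v) with (Rminus u v). rewrite Hc.
    replace ((c*0)^2+z) with z by ring. rewrite Rmult_0_r, Rplus_0_r.
    assert (e1 := sqrt_sqrt z (Rlt_le _ _ Hz)).
    assert (p1 : 0 < sqrt z) by (apply sqrt_lt_R0; lra).
    assert (e2 : sqrt (a^2+z) * sqrt (a^2+z) = a^2+z) by (apply sqrt_sqrt; nra).
    assert (p2 : 0 < sqrt (a^2+z)) by (apply sqrt_lt_R0; nra).
    set (R := sqrt (a^2+z)) in *. set (q := sqrt z) in *. clearbody R q.
    replace (q^2) with z by (rewrite <- e1; ring).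
    clear e1 p1 q. assert (Ez : z = R*R - a^2) by lra. subst z.
    unfold c. field. repeat split; nra. }
  rewrite E. apply (is_RInt_derive (fun t => -(z^2/(2*c)) / (sqrt((c*t)^2+z) + c*t)^2) (fun t => T2 (c*t) z)).
  - intros x Hx. apply dA2; try lra. rewrite Rmin_left in Hx; lra.
  - intros x Hx. apply cont_T2; try lra. rewrite Rmin_left in Hx; lra.
Qed.

Lemma int_sin a : is_RInt (fun t => 2*a*sin t) 0 (PI/2) (2*a).
Proof.
  assert (E : 2*a = minus ((fun t => -(2*a)*cos t) (PI/2)) ((fun t => -(2*a)*cos t) 0)).
  { cbv beta. change (minus ?u ?v) with (Rminus u v). rewrite cos_PI2, cos_0. ring. }
  set (f := fun t => 2*a*sin t). rewrite E. unfold f.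
  { apply (is_RInt_derive (fun t => -(2*a)*cos t) (fun t => 2*a*sin t)).
  - intros x _. auto_derive; auto. ring.
  - intros x _. apply (ex_derive_continuous (K:=R_AbsRing) (V:=R_NormedModule)). auto_derive. auto. }
Qed.

Lemma T2mono t s x : 0 <= t -> t <= s -> 0 < x -> T2 s x <= T2 t x.
Proof.
  intros Ht Hts Hx. unfold T2.
  destruct (sqrt_facts t x Ht Hx) as [e1 [p1 q1]].
  destruct (sqrt_facts s x ltac:(lra) Hx) as [e2 [p2 q2]].
  assert (le12 : sqrt (t^2+x) <= sqrt (s^2+x)) by (apply sqrt_le_1_alt; nra).
  set (r1 := sqrt (t^2+x)) in *. set (r2 := sqrt (s^2+x)) in *.
  clearbody r1 r2.
  unfold Rdiv. apply Rmult_le_compat_l; [apply pow2_ge_0|]. apply Rinv_le_contravar.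
  - apply Rmult_lt_0_compat; [lra|apply pow_lt; lra].
  - apply Rmult_le_compat; try lra. apply pow2_ge_0. apply pow_incr; lra.
Qed.

Definition Ig (a x t : R) := (2 * a ^ 2 * sin t ^ 2 + x) / sqrt (a ^ 2 * sin t ^ 2 + x).

Lemma Ig_s a x t : Ig a x t = (2*(a*sin t)^2 + x)/sqrt((a*sin t)^2+x).
Proof. unfold Ig. f_equal; [ring|f_equal; ring]. Qed.

Lemma Ig_ex a x : 0 < x -> ex_RInt (Ig a x) 0 (PI/2).
Proof.
  intros Hx. apply (ex_RInt_continuous (V:=R_CompleteNormedModule)). intros t _.
  apply (ex_derive_continuous (K:=R_AbsRing) (V:=R_NormedModule)). unfold Ig.
  assert (0 <= a^2*sin t^2) by (apply Rmult_le_pos; apply pow2_ge_0).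
  assert (0 < sqrt (a^2*sin t^2+x)) by (apply sqrt_lt_R0; lra).
  auto_derive.
  replace (a*(a*1)*(sin t*(sin t*1))+x) with (a^2*sin t^2+x) by ring.
  repeat split; try lra.
Qed.

Lemma pt_bound a y z t : 0 < a -> 0 < y -> y <= z -> 0 < t < PI/2 ->
  z * Ig a z t - y * Ig a y t <= (z-y) * (2*a*sin t + T1 (2*a/PI*t) z + T2 (2*a/PI*t) z).
Proof.
  intros Ha Hy Hz Ht. assert (HP := PI_RGT_0).
  rewrite !Ig_s.
  assert (Hs : 0 <= a * sin t) by (apply Rmult_le_pos; [lra| apply sin_ge_0; lra]).
  assert (J := jordan t ltac:(lra)).
  assert (Ht' : 0 <= 2*a/PI*t) by (apply Rmult_le_pos; [apply Rmult_le_pos; [lra|apply Rlt_le, Rinv_0_lt_compat; lra]|lra]).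
  assert (Hts : 2*a/PI*t <= a*sin t).
  { replace (2*a/PI*t) with (a*(2/PI*t)) by (field; lra). apply Rmult_le_compat_l; lra. }
  assert (C := conv (a*sin t) y z Hs Hy Hz). unfold jf in C.
  assert (M := Tmono (2*a/PI*t) (a*sin t) z Ht' Hts ltac:(lra)).
  assert (0 <= z - y) by lra.
  assert ((z-y)*(2*(a*sin t) + T1 (a*sin t) z + T2 (a*sin t) z) <= (z-y) * (2*a*sin t + T1 (2*a/PI*t) z + T2 (2*a/PI*t) z)).
  { apply Rmult_le_compat_l; lra. }
  lra.
Qed.

Definition Kb a z := 2*a + PI*z/(4*sqrt(a^2+z)) + PI*z/(2*(a+sqrt(a^2+z))).

Lemma int_K a z : 0 < a -> 0 < z ->
  is_RInt (fun t => 2*a*sin t + T1 (2*a/PI*t) z + T2 (2*a/PI*t) z) 0 (PI/2) (Kb a z).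
Proof.
  intros Ha Hz. unfold Kb.
  apply (is_RInt_plus (fun t => 2*a*sin t + T1 (2*a/PI*t) z) (fun t => T2 (2*a/PI*t) z)).
  apply (is_RInt_plus (fun t => 2*a*sin t) (fun t => T1 (2*a/PI*t) z)).
  apply int_sin. apply int_T1; auto. apply int_T2; auto.
Qed.

Definition Fm a x := x*(a^2+1+x) - x * RInt (Ig a x) 0 (PI/2).

Lemma F_local a y z : 0 < a < 1 -> 0 < y -> y < z -> 9*z < 10*y -> Fm a y < Fm a z.
Proof.
  intros Ha Hy Hyz H9. assert (HP := PI_RGT_0).
  assert (Iy := RInt_correct _ _ _ (Ig_ex a y Hy)).
  assert (Iz := RInt_correct _ _ _ (Ig_ex a z ltac:(lra))).
  set (vy := RInt (Ig a y) 0 (PI/2)) in *. set (vz := RInt (Ig a z) 0 (PI/2)) in *.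
  assert (D := is_RInt_minus _ _ _ _ _ _ (is_RInt_scal _ _ _ z _ Iz) (is_RInt_scal _ _ _ y _ Iy)).
  assert (L := is_RInt_le _ _ 0 (PI/2) _ _ ltac:(lra) D (is_RInt_scal _ _ _ (z-y) _ (int_K a z ltac:(lra) ltac:(lra)))).
  assert (L' : z*vz - y*vy <= (z-y)*Kb a z).
  { apply L. intros t Ht. apply (pt_bound a y z t); lra. }
  assert (R2 : sqrt (a^2+z) * sqrt (a^2+z) = a^2+z) by (apply sqrt_sqrt; nra).
  assert (Rp : 0 < sqrt (a^2+z)) by (apply sqrt_lt_R0; nra).
  assert (AL := alg a z (sqrt (a^2+z)) Ha ltac:(lra) R2 Rp PI HP (Rlt_le _ _ PI_lt_32)).
  unfold Kb in L'. unfold Fm. fold vy vz.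
  assert (0 < z - y) by lra.
  assert ((z-y)*(PI*z/(4*sqrt(a^2+z)) + PI*z/(2*(a+sqrt(a^2+z)))) <= (z-y)*((1-a)^2 + 19/10*z))
    by (apply Rmult_le_compat_l; lra).
  nra.
Qed.

Lemma chain (G : R -> R) :
  (forall y z, 0 < y -> y < z -> 9*z < 10*y -> G y < G z) ->
  forall y z, 0 < y -> y < z -> G y < G z.
Proof.
  intros Hl y z Hy Hz.
  destruct (archimed_cor1 (y/(10*(z-y)))) as [N [HN N0]].
  { apply Rdiv_lt_0_compat; lra. }
  assert (INp : 0 < INR N) by (apply lt_0_INR; lia).
  set (h := (z-y)/INR N).
  assert (hp : 0 < h) by (unfold h; apply Rdiv_lt_0_compat; lra).
  assert (h10 : 10*h < y).
  { unfold h.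
    assert (H : / INR N < y / (10 * (z - y))) by exact HN.
    apply (Rmult_lt_compat_l (10*(z-y))) in H; [|lra].
    replace (10*(z-y)*(y/(10*(z-y)))) with y in H by (field; lra).
    unfold Rdiv. lra. }
  assert (K : forall k, G y < G (y + INR (S k) * h)).
  { induction k.
    - simpl. rewrite Rmult_1_l. apply Hl; lra.
    - eapply Rlt_trans; [exact IHk|].
      assert (0 <= INR (S k)) by apply pos_INR.
      rewrite (S_INR (S k)).
      replace (y + (INR (S k) + 1) * h) with ((y + INR (S k) * h) + h) by ring.
      apply Hl; nra. }
  destruct N as [|m]; [lia|].
  specialize (K m).
  replace (y + INR (S m) * h) with z in K by (unfold h; field; lra).
  exact K.
Qed.

Lemma F_incr a y z : 0 < a < 1 -> 0 < y -> y < z -> Fm a y < Fm a z.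
Proof. intros Ha. apply (chain (Fm a)). intros; apply F_local; auto. Qed.

Lemma Ig0 a : 0 < a -> integral (Ig a 0) 0 (PI/2) = 2*a.
Proof.
  intros Ha. assert (HP := PI_RGT_0).
  assert (H : is_RInt (Ig a 0) 0 (PI/2) (2*a)).
  { apply (is_RInt_ext (fun t => 2*a*sin t)); [|apply int_sin].
    intros t Ht. rewrite Rmin_left, Rmax_right in Ht by lra.
    change (2*a*sin t = Ig a 0 t).
    rewrite Ig_s. assert (0 < sin t) by (apply sin_gt_0; lra).
    replace ((a*sin t)^2 + 0) with ((a*sin t)^2) by ring. rewrite <- Rsqr_pow2. rewrite sqrt_Rsqr by nra. unfold Rsqr. field. nra. }
  rewrite integral_RInt by (eexists; exact H). apply is_RInt_unique; exact H.
Qed.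

Lemma phi2_eq s : phi2 s = integral (Ig 1 (s^2)) 0 (PI/2).
Proof.
  unfold phi2. f_equal. apply functional_extensionality; intro t. unfold Ig. f_equal; [ring | f_equal; ring].
Qed.

Lemma phi2_bound s : 0 <= phi2 s /\ phi2 s <= 2*sqrt(1+s^2).
Proof.
  assert (HP := PI_RGT_0). rewrite phi2_eq.
  destruct (Req_dec s 0) as [E|E].
  - subst s. replace (0^2) with 0 by ring. rewrite Ig0 by lra.
    replace (1+0) with 1 by ring. rewrite sqrt_1. lra.
  - assert (Hv : 0 < s^2) by (rewrite <- Rsqr_pow2; apply Rsqr_pos_lt; exact E).
    set (v := s^2) in *. clearbody v.
    rewrite integral_RInt by (apply Ig_ex; exact Hv).
    assert (I := RInt_correct _ _ _ (Ig_ex 1 v Hv)).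
    split.
    + apply RInt_ge_0; [lra| apply Ig_ex; exact Hv|].
      intros t Ht. unfold Ig.
      assert (0 <= 1 ^ 2 * sin t ^ 2) by (apply Rmult_le_pos; apply pow2_ge_0).
      apply Rmult_le_pos; [lra|]. apply Rlt_le, Rinv_0_lt_compat, sqrt_lt_R0; lra.
    + assert (U := is_RInt_plus _ _ _ _ _ _ (int_sin 1) (int_T2 1 v ltac:(lra) Hv)).
      assert (L := is_RInt_le _ _ 0 (PI/2) _ _ ltac:(lra) I U).
      eapply Rle_trans; [apply L|].
      * intros t Ht. change (Ig 1 v t <= 2*1*sin t + T2 (2*1/PI*t) v).
        rewrite Ig_s.
        assert (Hs : 0 <= 1 * sin t) by (rewrite Rmult_1_l; apply sin_ge_0; lra).
        rewrite T2_id by assumption.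
        assert (J := jordan t ltac:(lra)).
        assert (Ht' : 0 <= 2*1/PI*t) by (apply Rmult_le_pos; [apply Rmult_le_pos; [lra|apply Rlt_le, Rinv_0_lt_compat; lra]|lra]).
        assert (Hts : 2*1/PI*t <= 1*sin t) by (replace (2*1/PI*t) with (2/PI*t) by (field; lra); lra).
        assert (M := T2mono (2*1/PI*t) (1*sin t) v Ht' Hts Hv). lra.
      * change (2*1 + PI*v/(2*(1+sqrt(1^2+v))) <= 2*sqrt(1+v)).
        replace (1^2+v) with (1+v) by ring.
        assert (e : sqrt (1+v) * sqrt (1+v) = 1+v) by (apply sqrt_sqrt; lra).
        assert (p : 0 <= sqrt (1+v)) by apply sqrt_pos.
        set (R := sqrt (1+v)) in *. clearbody R.
        assert (R1 : 1 < R) by nra.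
        replace (PI*v/(2*(1+R))) with (PI*(R-1)/2) by (replace v with (R*R-1) by lra; field; lra).
        assert (HP4 := PI_4). nra.
Qed.

Theorem mainTheorem17 :
  forall a : R, 0 < a < 1 ->
  forall d1 d2 : R, 0 < d1 -> d1 < d2 ->
    psi2 a (Lfun a d2) d2 < psi2 a (Lfun a d1) d1.
Proof.
  intros a Ha d1 d2 H1 H12.
  assert (HP := PI_RGT_0).
  unfold Lfun.
  set (s := phi1_inv a).
  destruct (phi2_bound s) as [p0 p1].
  set (p := phi2 s) in *.
  set (c := 1 - p^2/(4*(1+s^2))).
  assert (c0 : 0 <= c).
  { unfold c. assert (e : sqrt (1+s^2) * sqrt (1+s^2) = 1+s^2) by (apply sqrt_sqrt; nra).
    assert (p^2 <= 4*(1+s^2)) by nra.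
    assert (p^2/(4*(1+s^2)) <= 1).
    { apply (Rmult_le_reg_r (4*(1+s^2))); [nra|]. unfold Rdiv. rewrite Rmult_assoc, Rinv_l by nra. lra. }
    lra. }
  change (psi2 a (4/d2*c) d2 < psi2 a (4/d1*c) d1).
  assert (Epsi : forall x d, psi2 a x d = 4/d*(a^2+x+1 - integral (Ig a x) 0 (PI/2))) by reflexivity.
  rewrite !Epsi.
  destruct (Req_dec c 0) as [C|C].
  - rewrite C, !Rmult_0_r, Ig0 by lra.
    assert (0 < (1-a)^2) by nra.
    assert (4/d2 < 4/d1).
    { unfold Rdiv. apply Rmult_lt_compat_l; [lra|]. apply Rinv_lt_contravar; nra. }
    replace (a^2+0+1-2*a) with ((1-a)^2) by ring. nra.
  - assert (cp : 0 < c) by lra.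
    assert (x1p : 0 < 4/d1*c) by (apply Rmult_lt_0_compat; [apply Rdiv_lt_0_compat|]; lra).
    assert (x2p : 0 < 4/d2*c) by (apply Rmult_lt_0_compat; [apply Rdiv_lt_0_compat|]; lra).
    assert (x12 : 4/d2*c < 4/d1*c).
    { apply Rmult_lt_compat_r; [lra|]. unfold Rdiv. apply Rmult_lt_compat_l; [lra|]. apply Rinv_lt_contravar; nra. }
    assert (F := F_incr a _ _ Ha x2p x12). unfold Fm in F.
    rewrite !integral_RInt by (apply Ig_ex; assumption).
    set (I1 := RInt (Ig a (4/d1*c)) 0 (PI/2)) in *.
    set (I2 := RInt (Ig a (4/d2*c)) 0 (PI/2)) in *.
    assert (E : forall d I, 0 < d -> 4/d*(a^2+4/d*c+1-I) = (4/d*c*(a^2+1+4/d*c) - 4/d*c*I)/c).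
    { intros d I Hd. field. split; lra. }
    rewrite !E by lra.
    unfold Rdiv at 1 3. apply Rmult_lt_compat_r; [apply Rinv_0_lt_compat; lra|]. exact F.
Qed.
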